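(* Fix constants $0<A_m<A_M$, $B_i>0$ for $2\le i\le 5$, $C>0$, and an integer $n\ge 2$. Let $T_0<b$ and let $x:[T_0,b]\to\mathbb{R}^2$ be a $C^5$ unit-speed curve with $\sup_t\|x^{(i)}(t)\|\le B_i$ for $2\le i\le 5$. Let $\epsilon>0$ be sufficiently small, let $T=(T_0<T_1<\dots<T_n\le b)$ satisfy $A_m\epsilon<L_j:=T_j-T_{j-1}<A_M\epsilon$ for $1\le j\le n$, let $Y_j=x(T_j)$, and suppose $T$ is admissible. Write $q_j:=(Y_j-Y_{j-1})/L_j=r_j(\cos\omega_j,\sin\omega_j)$ with $r_j>0$, $\omega_j\in\mathbb{R}$. Then there exist $0<\delta_0<\delta_1<1$, depending only on $A_m,A_M,B_2,B_3,B_4,C$ and $\epsilon$, such that $r_j\in[\delta_0,\delta_1]$ for all $1\le j\le n$.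
   Context: For $\epsilon$ sufficiently small $q_j\ne 0$, and one defines $k_j:=\dfrac{\sqrt{12(1-\|q_j\|^2)}}{L_j\|q_j\|}$ for $1\le j\le n$ (Euclidean norm). The sequence $T$ is called admissible when $k_j\ge C$ for all $1\le j\le n$. *)

(* Defs.v *)
From Stdlib Require Import Reals.
From Coquelicot Require Import Coquelicot.
Open Scope R_scope.

Definition norm2 (v : R * R) : R := sqrt (fst v ^ 2 + snd v ^ 2).

Definition cx (x : R -> R * R) : R -> R := fun s => fst (x s).
Definition cy (x : R -> R * R) : R -> R := fun s => snd (x s).

Definition Dn (x : R -> R * R) (k : nat) (t : R) : R * R :=
  (Derive_n (cx x) k t, Derive_n (cy x) k t).

Definition C5_on (x : R -> R * R) (a b : R) : Prop :=
  forall t, a <= t <= b ->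
    (forall k, (k < 5)%nat ->
       ex_derive (Derive_n (cx x) k) t /\ ex_derive (Derive_n (cy x) k) t) /\
    continuous (Derive_n (cx x) 5) t /\ continuous (Derive_n (cy x) 5) t.

Definition unit_speed_on (x : R -> R * R) (a b : R) : Prop :=
  forall t, a <= t <= b -> norm2 (Dn x 1 t) = 1.

Definition Lj (T : nat -> R) (j : nat) : R := T j - T (j - 1)%nat.

Definition qj (x : R -> R * R) (T : nat -> R) (j : nat) : R * R :=
  ((fst (x (T j)) - fst (x (T (j - 1)%nat))) / Lj T j,
   (snd (x (T j)) - snd (x (T (j - 1)%nat))) / Lj T j).

(* r_j = ||q_j|| (the modulus in the polar form q_j = r_j (cos w_j, sin w_j)) *)
Definition rj (x : R -> R * R) (T : nat -> R) (j : nat) : R := norm2 (qj x T j).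

Definition kj (x : R -> R * R) (T : nat -> R) (j : nat) : R :=
  sqrt (12 * (1 - norm2 (qj x T j) ^ 2)) / (Lj T j * norm2 (qj x T j)).

Definition admissible (C : R) (x : R -> R * R) (T : nat -> R) (n : nat) : Prop :=
  forall j, (1 <= j <= n)%nat -> kj x T j >= C.

(* Main.v *)
Require Import Defs.
From Stdlib Require Import Reals Lra Lia Psatz.
From Coquelicot Require Import Coquelicot.
Open Scope R_scope.

Lemma mvt' (f : R -> R) s t : s < t ->
  (forall y, s <= y <= t -> ex_derive f y) ->
  exists c, s <= c <= t /\ f t - f s = Derive f c * (t - s).
Proof.
  intros Hst Hd.
  destruct (MVT_gen f s t (Derive f)) as [c [Hc E]].
  - intros y Hy. rewrite Rmin_left in Hy by lra. rewrite Rmax_right in Hy by lra.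
    apply Derive_correct, Hd; lra.
  - intros y Hy. rewrite Rmin_left in Hy by lra. rewrite Rmax_right in Hy by lra.
    apply continuity_pt_filterlim. apply (ex_derive_continuous (K:=R_AbsRing) (V:=R_NormedModule)), Hd; lra.
  - rewrite Rmin_left in Hc by lra. rewrite Rmax_right in Hc by lra.
    exists c; split; [lra | exact E].
Qed.

Lemma abs_le_norm p q : Rabs p <= sqrt (p ^ 2 + q ^ 2).
Proof.
  rewrite <- sqrt_Rsqr_abs. apply sqrt_le_1_alt. unfold Rsqr. nra.
Qed.

Lemma mono (T : nat -> R) n :
  (forall j, (1 <= j <= n)%nat -> T (j - 1)%nat < T j) ->
  forall k, (k <= n)%nat -> T 0%nat <= T k /\ T k <= T n.
Proof.
  intros H k Hk. split.
  - induction k. lra. 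
    specialize (H (S k) ltac:(lia)). replace (S k - 1)%nat with k in H by lia.
    specialize (IHk ltac:(lia)). lra.
  - remember (n - k)%nat as d. assert (k = n - d)%nat by lia. subst k. clear Heqd Hk.
    induction d. replace (n-0)%nat with n by lia. lra.
    destruct (Nat.le_gt_cases n d).
    + replace (n - S d)%nat with (n - d)%nat by lia. exact IHd.
    + specialize (H (n - d)%nat ltac:(lia)). replace (n - d - 1)%nat with (n - S d)%nat in H by lia. lra.
Qed.

Theorem lemma1 (Am AM B2 B3 B4 C : R) :
  0 < Am -> Am < AM -> 0 < B2 -> 0 < B3 -> 0 < B4 -> 0 < C ->
  exists eps0 : R, 0 < eps0 /\
  forall eps : R, 0 < eps < eps0 ->
  exists delta0 delta1 : R, 0 < delta0 /\ delta0 < delta1 /\ delta1 < 1 /\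
  forall (B5 : R) (n : nat) (T0 b : R) (x : R -> R * R) (T : nat -> R),
    0 < B5 -> (2 <= n)%nat -> T0 < b ->
    C5_on x T0 b ->
    unit_speed_on x T0 b ->
    (forall t, T0 <= t <= b -> norm2 (Dn x 2 t) <= B2) ->
    (forall t, T0 <= t <= b -> norm2 (Dn x 3 t) <= B3) ->
    (forall t, T0 <= t <= b -> norm2 (Dn x 4 t) <= B4) ->
    (forall t, T0 <= t <= b -> norm2 (Dn x 5 t) <= B5) ->
    T 0%nat = T0 ->
    (forall j, (1 <= j <= n)%nat -> T (j - 1)%nat < T j) ->
    T n <= b ->
    (forall j, (1 <= j <= n)%nat -> Am * eps < Lj T j < AM * eps) ->
    admissible C x T n ->
    forall j, (1 <= j <= n)%nat -> delta0 <= rj x T j <= delta1.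
Proof.
  intros HAm HAM HB2 HB3 HB4 HC.
  exists (Rmin (/ (4 * B2 * AM)) (/ (C * Am))). split.
  { apply Rmin_pos; apply Rinv_0_lt_compat; nra. }
  intros eps [Heps Heps0].
  assert (E1 : eps < / (4 * B2 * AM)) by (eapply Rlt_le_trans; [exact Heps0| apply Rmin_l]).
  assert (E2 : eps < / (C * Am)) by (eapply Rlt_le_trans; [exact Heps0| apply Rmin_r]).
  assert (E1' : 4 * B2 * AM * eps < 1).
  { apply (Rmult_lt_compat_l (4 * B2 * AM)) in E1; [|nra].
    rewrite Rinv_r in E1 by nra. lra. }
  assert (E2' : C * Am * eps < 1).
  { apply (Rmult_lt_compat_l (C * Am)) in E2; [|nra].
    rewrite Rinv_r in E2 by nra. lra. }
  set (c := (C * Am * eps) ^ 2 / 48).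
  assert (Hce : 0 < C*Am*eps) by (repeat apply Rmult_lt_0_compat; lra).
  assert (Hy2 : 0 < (C*Am*eps)^2 < 1).
  { split. apply pow_lt; lra. assert (0 < C*Am*eps < 1) by lra. simpl. nra. }
  assert (Hc0 : 0 < c) by (unfold c; unfold Rdiv; nra).
  assert (Hc1 : c < 1/48) by (unfold c; unfold Rdiv; nra).
  exists (1/2), (sqrt (1 - c)).
  assert (Hs1 : sqrt (1 - c) < 1).
  { apply Rlt_le_trans with (sqrt 1); [apply sqrt_lt_1_alt; split; lra | rewrite sqrt_1; lra]. }
  assert (Hs2 : 1/2 < sqrt (1 - c)).
  { replace (1/2) with (sqrt ((1/2)^2)) by (apply sqrt_pow2; lra).
    apply sqrt_lt_1_alt. split; lra. }
  split; [lra|]. split; [lra|]. split; [lra|].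
  intros B5 n T0 b x T HB5 Hn HTb HC5 Hus H2 H3 H4 H5 HT0 Hinc HTn HL Hadm j Hj.
  set (s := T (j - 1)%nat). set (t1 := T j).
  destruct (mono T n Hinc (j - 1)%nat ltac:(lia)) as [Hs _].
  destruct (mono T n Hinc j ltac:(lia)) as [_ Ht].
  pose proof (Hinc j Hj) as Hst. fold s t1 in Hst.
  fold s in Hs. fold t1 in Ht.
  pose proof (HL j Hj) as HLj. unfold Lj in HLj. fold s t1 in HLj.
  set (L := t1 - s) in *.
  set (a := cx x). set (d := cy x).
  assert (Hin : forall y, s <= y <= t1 -> T0 <= y <= b) by (intros; lra).
  assert (Da : forall y, s <= y <= t1 -> ex_derive a y).
  { intros y Hy. destruct (HC5 y (Hin y Hy)) as [Hk _]. apply (Hk 0%nat ltac:(lia)). }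
  assert (Dd : forall y, s <= y <= t1 -> ex_derive d y).
  { intros y Hy. destruct (HC5 y (Hin y Hy)) as [Hk _]. apply (Hk 0%nat ltac:(lia)). }
  assert (DDa : forall y, s <= y <= t1 -> ex_derive (Derive a) y).
  { intros y Hy. destruct (HC5 y (Hin y Hy)) as [Hk _]. apply (Hk 1%nat ltac:(lia)). }
  assert (DDd : forall y, s <= y <= t1 -> ex_derive (Derive d) y).
  { intros y Hy. destruct (HC5 y (Hin y Hy)) as [Hk _]. apply (Hk 1%nat ltac:(lia)). }
  set (u1 := Derive a s). set (u2 := Derive d s).
  assert (Hu : u1 ^ 2 + u2 ^ 2 = 1).
  { pose proof (Hus s ltac:(lra)) as U. unfold norm2, Dn in U. simpl in U.
    fold a d in U. fold u1 u2 in U.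
    assert (0 <= u1 * (u1 * 1) + u2 * (u2 * 1)) by nra.
    apply (f_equal (fun z => z * z)) in U. rewrite sqrt_sqrt in U by nra. change (u1 * (u1*1) + u2*(u2*1) = 1*1) in U. simpl. lra. }
  assert (Dev : forall y, s <= y <= t1 ->
     Rabs (Derive a y - u1) <= B2 * (y - s) /\ Rabs (Derive d y - u2) <= B2 * (y - s)).
  { intros y Hy. destruct (Rle_lt_or_eq_dec s y (proj1 Hy)) as [Hsy|Hsy].
    2:{ subst y. unfold u1, u2. rewrite !Rminus_diag, Rabs_R0. split; lra. }
    split.
    - destruct (mvt' (Derive a) s y Hsy) as [z [Hz Ez]].
      { intros; apply DDa; lra. }
      unfold u1. rewrite Ez, Rabs_mult, (Rabs_right (y - s)) by lra.
      apply Rmult_le_compat_r; [lra|].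
      pose proof (H2 z ltac:(lra)) as B. unfold norm2, Dn in B. change (sqrt (Derive (Derive a) z ^ 2 + Derive (Derive d) z ^ 2) <= B2) in B.
      eapply Rle_trans; [|exact B]. apply abs_le_norm.
    - destruct (mvt' (Derive d) s y Hsy) as [z [Hz Ez]].
      { intros; apply DDd; lra. }
      unfold u2. rewrite Ez, Rabs_mult, (Rabs_right (y - s)) by lra.
      apply Rmult_le_compat_r; [lra|].
      pose proof (H2 z ltac:(lra)) as B. unfold norm2, Dn in B. change (sqrt (Derive (Derive a) z ^ 2 + Derive (Derive d) z ^ 2) <= B2) in B.
      eapply Rle_trans; [|exact B].
      replace (Derive (Derive a) z ^ 2 + Derive (Derive d) z ^ 2) with
        (Derive (Derive d) z ^ 2 + Derive (Derive a) z ^ 2) by ring.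
      apply abs_le_norm. }
  set (h := fun y => u1 * a y + u2 * d y).
  assert (Dh : forall y, s <= y <= t1 -> is_derive h y (u1 * Derive a y + u2 * Derive d y)).
  { intros y Hy. unfold h. apply @is_derive_plus.
    - apply (is_derive_scal a y u1 (Derive a y)). apply Derive_correct, Da; lra.
    - apply (is_derive_scal d y u2 (Derive d y)). apply Derive_correct, Dd; lra. }
  destruct (mvt' h s t1 Hst) as [z [Hz Ez]].
  { intros y Hy. eexists. apply Dh; lra. }
  rewrite (is_derive_unique h z _ (Dh z Hz)) in Ez.
  destruct (Dev z Hz) as [Dv1 Dv2].
  assert (Hu1 : Rabs u1 <= 1).
  { rewrite <- sqrt_1, <- Hu. apply abs_le_norm. }
  assert (Hu2 : Rabs u2 <= 1).
  { rewrite <- sqrt_1, <- Hu. rewrite Rplus_comm. apply abs_le_norm. }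
  assert (Hder : u1 * Derive a z + u2 * Derive d z >= 1 - 2 * B2 * L).
  { assert (K1 : Rabs (u1 * (Derive a z - u1)) <= B2 * L).
    { rewrite Rabs_mult. assert (0 <= Rabs (Derive a z - u1)) by apply Rabs_pos.
      assert (0 <= Rabs u1) by apply Rabs_pos. unfold L. nra. }
    assert (K2 : Rabs (u2 * (Derive d z - u2)) <= B2 * L).
    { rewrite Rabs_mult. assert (0 <= Rabs (Derive d z - u2)) by apply Rabs_pos.
      assert (0 <= Rabs u2) by apply Rabs_pos. unfold L. nra. }
    apply Rabs_le_between in K1. apply Rabs_le_between in K2. simpl in Hu. nra. }
  set (p := (a t1 - a s) / L). set (q := (d t1 - d s) / L).
  assert (HL0 : 0 < L) by (unfold L; lra).
  assert (Hpq : u1 * p + u2 * q >= 1/2).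
  { assert (Eq : u1 * p + u2 * q = (u1 * a t1 + u2 * d t1 - (u1 * a s + u2 * d s)) / L)
      by (unfold p, q; field; lra).
    unfold h in Ez. rewrite Eq, Ez. fold L.
    unfold Rdiv. rewrite Rmult_assoc, Rinv_r, Rmult_1_r by lra. nra. }
  assert (Hr : rj x T j = sqrt (p ^ 2 + q ^ 2)) by reflexivity.
  assert (Hpq2 : 1/4 <= p ^ 2 + q ^ 2).
  { clearbody p q. assert (0 <= (u1 * q - u2 * p) ^ 2) by apply pow2_ge_0.
    assert ((u1 * p + u2 * q) ^ 2 + (u1 * q - u2 * p) ^ 2 = (u1^2+u2^2) * (p^2+q^2)) by ring.
    rewrite Hu in H0. assert ((1/2)^2 <= (u1 * p + u2 * q) ^ 2) by (apply pow_incr; lra). lra. }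
  assert (Hr0 : 1/2 <= rj x T j).
  { rewrite Hr. replace (1/2) with (sqrt ((1/2)^2)) by (apply sqrt_pow2; lra).
    apply sqrt_le_1_alt. lra. }
  split; [exact Hr0|].
  pose proof (Hadm j Hj) as K. unfold kj in K. fold (rj x T j) in K.
  unfold Lj in K. fold s t1 L in K.
  set (r := rj x T j) in *. clearbody r L.
  assert (Hlr : 0 < L * r) by nra.
  assert (Ks : C * (L * r) <= sqrt (12 * (1 - r ^ 2))).
  { apply Rge_le in K. apply (Rmult_le_compat_r (L * r)) in K; [|lra].
    unfold Rdiv in K. rewrite Rmult_assoc, Rinv_l, Rmult_1_r in K by lra. exact K. }
  assert (Kpos : 0 < 12 * (1 - r ^ 2)).
  { destruct (Rlt_or_le 0 (12 * (1 - r ^ 2))) as [G|G]; [exact G|].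
    destruct G as [G|G].
    - rewrite sqrt_neg_0 in Ks by lra. nra.
    - rewrite G, sqrt_0 in Ks. nra. }
  assert (Ks2 : (C * (L * r)) ^ 2 <= 12 * (1 - r ^ 2)).
  { assert (0 <= C * (L * r)) by nra.
    pose proof (Rmult_le_compat _ _ _ _ H H Ks Ks) as KK.
    rewrite sqrt_sqrt in KK by lra. rewrite <- Rsqr_pow2. exact KK. }
  assert (Hr2 : r ^ 2 <= 1 - c).
  { unfold c.
    assert (Am * eps * (1/2) <= L * r) by nra.
    assert (0 <= Am * eps * (1/2)) by nra.
    assert (C * (Am * eps * (1/2)) <= C * (L * r)) by nra.
    assert ((C * (Am * eps * (1/2)))^2 <= (C * (L * r))^2).
    { apply pow_incr. split; nra. }
    nra. }
  replace r with (sqrt (r ^ 2)) by (apply sqrt_pow2; lra).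
  apply sqrt_le_1_alt. exact Hr2.
Qed.
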